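(* For every integer $k>9$, every subcubic graph $G$ with $\operatorname{tww}(G)\geq k$ that has minimal order among all subcubic graphs with twin-width at least $k$ has girth at least $5$.
   Context: All graphs are finite and simple. A graph is subcubic if its maximum degree is at most $3$. The girth is the length of a shortest cycle. A trigraph is a graph whose edges are each colored red or black; a graph is viewed as a trigraph with all edges black; the red degree of a vertex is the number of red edges incident to it. For a partition $\mathcal{P}$ of $V(G)$, the quotient trigraph $G/\mathcal{P}$ has vertex set $\mathcal{P}$; two distinct parts $U,W$ are joined by a black edge if every pair $\{u,w\}$ with $u\in U,w\in W$ is a black edge of $G$, are non-adjacent if no such pair is an edge, and are joined by a red edge otherwise. A contraction sequence of an $n$-vertex trigraph $G$ is a sequence $\mathcal{P}_n,\dots,\mathcal{P}_1$ of partitions of $V(G)$ where $\mathcal{P}_n$ is the partition into singletons and each $\mathcal{P}_i$ arises from $\mathcal{P}_{i+1}$ by merging two parts; its width is the maximum red degree over all $G/\mathcal{P}_i$, and $\operatorname{tww}(G)$ is the minimum width of a contraction sequence. *)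

(* Defs.v *)
From mathcomp Require Import all_boot.
Set Implicit Arguments. Unset Strict Implicit. Unset Printing Implicit Defensive.

(* A finite simple graph: vertex set a finType T, adjacency e : rel T that is
   symmetric and irreflexive. All edges are black (a graph viewed as a trigraph). *)
Section Graphs.
Variable T : finType.
Variable e : rel T.

Definition simple_graph : Prop := symmetric e /\ irreflexive e.

Definition degree (v : T) : nat := #|[set w | e v w]|.

Definition subcubic : Prop := forall v, degree v <= 3.

Definition is_graph_cycle (c : seq T) : bool :=
  [&& uniq c, 3 <= size c & path.cycle e c].

(* girth(G) >= g : every cycle has length at least g (acyclic graphs have
   infinite girth). *)
Definition girth_ge (g : nat) : Prop :=
  forall c : seq T, is_graph_cycle c -> g <= size c.

(* Quotient trigraph G/P: parts U, W distinct are joined by a red edge iff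
   some pair (u,w) is an edge but not every pair is an edge
   (all edges of G being black). *)
Definition red_edge (U W : {set T}) : bool :=
  [exists u in U, exists w in W, e u w] &&
  ~~ [forall u in U, forall w in W, e u w].

Definition red_degree (P : {set {set T}}) (U : {set T}) : nat :=
  #|[set W in P | (W != U) && red_edge U W]|.

Definition max_red_degree (P : {set {set T}}) : nat :=
  \max_(U in P) red_degree P U.

Definition singleton_partition : {set {set T}} := [set [set x] | x : T].

Definition merge_step (P Q : {set {set T}}) : Prop :=
  exists U W, [/\ U \in P, W \in P, U != W &
                  Q = (U :|: W) |: ((P :\ U) :\ W)].

(* A contraction sequence P_n, ..., P_1 (as a list starting at P_n). For n = 0
   the sequence consists of the (empty) singleton partition only. *)
Fixpoint merge_chain (P : {set {set T}}) (s : seq {set {set T}}) : Prop :=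
  match s with
  | [::] => True
  | Q :: s' => merge_step P Q /\ merge_chain Q s'
  end.

Definition contraction_sequence (s : seq {set {set T}}) : Prop :=
  match s with
  | [::] => False
  | P :: s' => [/\ P = singleton_partition, merge_chain P s' &
                   #|last P s'| <= 1]
  end.

Definition cs_width (s : seq {set {set T}}) : nat :=
  \max_(P <- s) max_red_degree P.

(* tww(G) >= k : every contraction sequence has width at least k
   (tww is the minimum width; contraction sequences always exist). *)
Definition tww_ge (k : nat) : Prop :=
  forall s, contraction_sequence s -> k <= cs_width s.

End Graphs.

(* Main.v *)
Require Import Defs.
From mathcomp Require Import all_boot.
Set Implicit Arguments. Unset Strict Implicit. Unset Printing Implicit Defensive.


Section Gen.
Variable T : finType.

Definition disj (P : {set {set T}}) : Prop :=
  forall U W, U \in P -> W \in P -> U != W -> [disjoint U & W].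

Lemma disjsU (A B C : {set T}) :
  [disjoint A :|: B & C] = [disjoint A & C] && [disjoint B & C].
Proof. by rewrite -!setI_eq0 setIUl setU_eq0. Qed.

Lemma disj_sing : disj (singleton_partition T).
Proof.
move=> U W /imsetP[x _ ->] /imsetP[y _ ->] neq.
rewrite disjoints1 in_set1; apply: contra neq => /eqP->; done.
Qed.

Lemma disj_merge P Q : disj P -> merge_step P Q -> disj Q.
Proof.
move=> dP [U [W [UP WP UW ->]]] A B.
rewrite !in_setU1 !in_setD1.
case/predU1P => [->|/and3P[AW AU AP]]; case/predU1P => [->|/and3P[BW BU BP]];
  rewrite ?eqxx //.
- move=> _; rewrite disjsU.
  by apply/andP; split; apply: dP; rewrite // eq_sym.
- move=> _; rewrite disjoint_sym disjsU.
  by apply/andP; split; apply: dP; rewrite // eq_sym.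
- by apply: dP.
Qed.

Lemma disj_chain P s : disj P -> merge_chain P s -> forall Q, Q \in s -> disj Q.
Proof.
elim: s P => [//|R s IH] P dP /= [mPR ms] Q.
have dR := disj_merge dP mPR.
rewrite in_cons => /predU1P[->//|]; exact: (IH R).
Qed.

Variable r : rel T.
Hypothesis r3 : forall v, #|[set w | r v w]| <= 3.

Lemma nbr_card (A : {set T}) : #|[set w | [exists a in A, r a w]]| <= 3 * #|A|.
Proof.
have -> : [set w | [exists a in A, r a w]] = \bigcup_(a in A) [set w | r a w].
  apply/setP => w; rewrite inE; apply/existsP/bigcupP.
    by case=> a /andP[aA raw]; exists a; rewrite ?inE.
  by case=> a aA; rewrite inE => raw; exists a; rewrite aA.
have H : #|\bigcup_(a in A) [set w | r a w]| <= \sum_(a in A) #|[set w | r a w]|.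
  apply: (big_ind2 (fun (X : {set T}) n => #|X| <= n)).
  - by rewrite cards0.
  - move=> X1 n1 X2 n2 h1 h2; apply: leq_trans (leq_card_setU X1 X2) _.
    exact: leq_add.
  - by [].
apply: leq_trans H _.
rewrite mulnC -sum_nat_const; apply: leq_sum => a _; exact: r3.
Qed.

Lemma touch_card (P : {set {set T}}) (A : {set T}) : disj P ->
  #|[set W in P | [exists a in A, exists w in W, r a w]]|
    <= #|[set w | [exists a in A, r a w]]|.
Proof.
move=> dP.
set S := [set w | [exists a in A, r a w]].
set Ws := [set W in P | _].
pose g (W : {set T}) : option T := [pick w in W :&: S].
have gP : forall W, W \in Ws -> exists2 w, w \in W & g W = Some w /\ w \in S.
  move=> W; rewrite inE => /andP[_ /existsP[a /andP[aA /existsP[w /andP[wW raw]]]]].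
  rewrite /g; case: pickP => [w'|].
    by rewrite inE => /andP[w'W w'S]; exists w'.
  by move/(_ w); rewrite inE wW /= inE; move/negbT/negP; case; apply/existsP; exists a; rewrite aA.
have inj : {in Ws &, injective g}.
  move=> W1 W2 h1 h2 eg.
  case: (gP _ h1) => w1 w1W [g1 _]; case: (gP _ h2) => w2 w2W [g2 _].
  move: eg; rewrite g1 g2 => -[ew]; subst w2.
  move: h1 h2; rewrite !inE => /andP[W1P _] /andP[W2P _].
  apply/eqP; apply/negPn/negP => ne.
  by move: (dP _ _ W1P W2P ne); rewrite -setI_eq0 => /eqP/setP/(_ w1); rewrite !inE w1W w2W.
rewrite -(card_in_imset inj).
apply: leq_trans (_ : #|[set Some w | w in S]| <= _); last by rewrite card_imset //; move=> x y [].
apply: subset_leq_card; apply/subsetP => o /imsetP[W WWs ->].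
case: (gP _ WWs) => w _ [-> wS]; exact: imset_f.
Qed.

Lemma small_red (P : {set {set T}}) (A : {set T}) : disj P -> #|A| <= 3 ->
  red_degree r P A <= 9.
Proof.
move=> dP A3.
apply: leq_trans (_ : #|[set W in P | [exists a in A, exists w in W, r a w]]| <= _).
  apply: subset_leq_card; apply/subsetP => W; rewrite !inE => /andP[WP /andP[_ /andP[ex _]]].
  rewrite WP /=; case/existsP: ex => a /andP[aA /existsP[w /andP[wW raw]]].
  by apply/existsP; exists a; rewrite aA; apply/existsP; exists w; rewrite wW.
apply: leq_trans (touch_card A dP) _.
apply: leq_trans (nbr_card A) _.
by rewrite (leq_mul2l 3 _ 3).
Qed.

End Gen.


Lemma imsetD1_inj (aT rT : finType) (g : aT -> rT) (A : {set aT}) x :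
  injective g -> g @: (A :\ x) = g @: A :\ g x.
Proof.
move=> ig; apply/setP => y; rewrite in_setD1; apply/imsetP/andP.
  case=> z; rewrite in_setD1 => /andP[zx zA] ->; split; last exact: imset_f.
  by rewrite (inj_eq ig).
case=> yx /imsetP[z zA ez]; exists z => //; rewrite in_setD1 zA andbT.
by apply: contra yx => /eqP ezx; rewrite ez ezx.
Qed.

Section Lift.
Variables (T T' : finType) (e : rel T) (e' : rel T') (f : T -> T').
Hypothesis fsurj : forall x, exists u, f u = x.
Hypothesis H1 : forall u v, e u v -> f u != f v -> e' (f u) (f v).
Hypothesis e'sym : symmetric e'.
Hypothesis e'3 : forall v, #|[set w | e' v w]| <= 3.

Definition pre (X : {set T'}) : {set T} := f @^-1: X.
Definition liftp (Q : {set {set T'}}) : {set {set T}} := pre @: Q.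

Lemma pre_inj : injective pre.
Proof.
move=> X Y eXY; apply/setP => x; case: (fsurj x) => u <-.
by move/setP: eXY => /(_ u); rewrite /pre !inE.
Qed.

Lemma lift_merge P Q : merge_step P Q -> merge_step (liftp P) (liftp Q).
Proof.
case=> U [W [UP WP UW ->]]; exists (pre U), (pre W); split.
- exact: imset_f.
- exact: imset_f.
- by rewrite (inj_eq pre_inj).
- by rewrite /liftp imsetU1 !imsetD1_inj //; try exact: pre_inj; rewrite /pre preimsetU.
Qed.

Lemma lift_chain P s : merge_chain P s -> merge_chain (liftp P) (map liftp s).
Proof.
elim: s P => [//|R s IH] P /= [m ms]; split; [exact: lift_merge | exact: IH].
Qed.

Lemma disj_lift Q : disj Q -> disj (liftp Q).
Proof.
move=> dQ A B /imsetP[X XQ ->] /imsetP[Y YQ ->] ne.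
have XY : X != Y by apply: contra ne => /eqP->.
move: (dQ _ _ XQ YQ XY); rewrite -!setI_eq0 => /eqP XY0.
by rewrite /pre -preimsetI XY0 preimset0.
Qed.

Lemma lift_red Q X : disj Q -> X \in Q ->
  red_degree e (liftp Q) (pre X) <= maxn (red_degree e' Q X) 9.
Proof.
move=> dQ XQ.
case: (boolP [exists Y in Q, (Y != X) && red_edge e (pre X) (pre Y) && ~~ red_edge e' X Y]).
- case/existsP => Y /andP[YQ /andP[/andP[YX rd] nrd]].
  have XY : X != Y by rewrite eq_sym.
  have dXY := dQ _ _ XQ YQ XY.
  case/andP: rd => /existsP[u /andP[uX /existsP[w /andP[wY euw]]]] _.
  rewrite /pre !inE in uX wY.
  have fuw : f u != f w.
    apply/eqP => eq; move: dXY; rewrite -setI_eq0 => /eqP/setP/(_ (f u)).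
    by rewrite !inE uX eq wY.
  have e'uw := H1 euw fuw.
  have all : forall x y, x \in X -> y \in Y -> e' x y.
    have ex : [exists u in X, exists w in Y, e' u w].
      by apply/existsP; exists (f u); rewrite uX /=; apply/existsP; exists (f w); rewrite wY.
    move: nrd; rewrite /red_edge ex /= negbK => /forall_inP H x y xX yY.
    by move: (H x xX) => /forall_inP; apply.
  have X3 : #|X| <= 3.
    apply: leq_trans (e'3 (f w)); apply: subset_leq_card; apply/subsetP => x xX.
    by rewrite inE e'sym; apply: all.
  apply: leq_trans (leq_maxr _ _).
  apply: leq_trans (_ : #|pre @: [set Z in Q | [exists a in X, exists z in Z, e' a z]]| <= _).
    apply: subset_leq_card; apply/subsetP => W; rewrite !inE => /andP[/imsetP[Z ZQ ->] /andP[ZX rd]].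
    apply: imset_f; rewrite inE ZQ /=.
    have XZ : X != Z by apply: contra ZX => /eqP->.
    have dXZ := dQ _ _ XQ ZQ XZ.
    case/andP: rd => /existsP[u' /andP[u'X /existsP[w' /andP[w'Z euw']]]] _.
    rewrite /pre !inE in u'X w'Z.
    have fuw' : f u' != f w'.
      apply/eqP => eq; move: dXZ; rewrite -setI_eq0 => /eqP/setP/(_ (f u')).
      by rewrite !inE u'X eq w'Z.
    apply/existsP; exists (f u'); rewrite u'X; apply/existsP; exists (f w'); rewrite w'Z.
    exact: H1.
  apply: leq_trans (leq_imset_card _ _) _.
  apply: leq_trans (touch_card e' X dQ) _.
  apply: leq_trans (nbr_card e'3 X) _.
  by rewrite (leq_mul2l 3 _ 3).
- rewrite negb_exists => /forallP H.
  apply: leq_trans (leq_maxl _ _).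
  apply: leq_trans (_ : #|pre @: [set Y in Q | (Y != X) && red_edge e' X Y]| <= _); last first.
    exact: leq_imset_card.
  apply: subset_leq_card; apply/subsetP => W; rewrite !inE => /andP[/imsetP[Y YQ ->] /andP[YX rd]].
  have YX' : Y != X by apply: contra YX => /eqP->.
  apply: imset_f; rewrite inE YQ YX' /=.
  move: (H Y); rewrite YQ YX' rd /=; exact: negbNE.
Qed.

Lemma liftp_max Q : disj Q ->
  max_red_degree e (liftp Q) <= maxn (max_red_degree e' Q) 9.
Proof.
move=> dQ; apply/bigmax_leqP => U /imsetP[X XQ ->].
apply: leq_trans (lift_red dQ XQ) _.
rewrite geq_max leq_maxr andbT.
apply: leq_trans (leq_maxl _ 9); rewrite /max_red_degree.
exact: (@leq_bigmax_cond _ (fun X => X \in Q) (fun X => red_degree e' Q X) _ XQ).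
Qed.

End Lift.


Section Init.
Variables (T : finType) (e : rel T).
Hypothesis e3 : forall v, #|[set w | e v w]| <= 3.

Definition fibv (psi : T -> T) y := [set v | psi v == y].
Definition Pend (psi : T -> T) := [set fibv psi (psi u) | u : T].

Lemma Pend_disj psi : disj (Pend psi).
Proof.
move=> A B /imsetP[x _ ->] /imsetP[y _ ->] ne.
rewrite -setI_eq0; apply/eqP/setP => v; rewrite !inE.
apply/negbTE; apply/negP => /andP[/eqP h1 /eqP h2].
by move: ne; rewrite /fibv -h1 -h2 eqxx.
Qed.

Lemma Pend_max psi : (forall x, #|fibv psi (psi x)| <= 3) -> max_red_degree e (Pend psi) <= 9.
Proof.
move=> h; apply/bigmax_leqP => U /imsetP[x _ ->].
apply: small_red => //; exact: Pend_disj.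
Qed.

Lemma sing_max : max_red_degree e (singleton_partition T) <= 9.
Proof.
apply/bigmax_leqP => U /imsetP[x _ ->].
apply: small_red => //; first exact: disj_sing.
by rewrite cards1.
Qed.

Lemma chain_rcons (P : {set {set T}}) s Q :
  merge_chain P s -> merge_step (last P s) Q -> merge_chain P (rcons s Q).
Proof. by elim: s P => [|R s IH] P /=; [|case=> m ms ml; split => //; apply: IH]. Qed.

Lemma init n : forall phi : T -> T, (forall x, phi (phi x) = phi x) ->
  (forall x, #|fibv phi (phi x)| <= 3) -> #|[set u | phi u != u]| = n ->
  exists s0, [/\ merge_chain (singleton_partition T) s0,
     last (singleton_partition T) s0 = Pend phi &
     forall P, P \in singleton_partition T :: s0 -> max_red_degree e P <= 9].
Proof.
elim: n => [|n IH] phi idem f3 cn.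
  have fix1 : forall u, phi u = u.
    move=> u; apply/eqP; apply/negPn/negP => ne.
    by move/eqP: cn; rewrite cards_eq0 => /eqP/setP/(_ u); rewrite !inE ne.
  exists [::]; split => //.
    apply/setP => W; apply/imsetP/imsetP => -[u _ ->]; exists u => //;
      apply/setP => v; rewrite !inE !fix1 //.
  by move=> P; rewrite inE => /eqP->; exact: sing_max.
have [u] : exists u, u \in [set u | phi u != u].
  by apply/card_gt0P; rewrite cn.
rewrite inE => nu.
pose phi' := fun v : T => if v == u then u else phi v.
have hneq : forall v, v != u -> phi v != u.
  move=> v vu; apply/eqP => pv; move: nu; by rewrite -pv idem => /eqP; apply.
have idem' : forall x, phi' (phi' x) = phi' x.
  move=> x; rewrite /phi'; case: (x =P u) => [xu|/eqP xu].
    by subst x; rewrite eqxx.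
  by rewrite (negbTE (hneq _ xu)) idem.
have sub : forall x, fibv phi' (phi' x) \subset fibv phi (phi x).
  move=> x; apply/subsetP => v; rewrite !inE /phi'.
  case: (eqVneq x u) => [->|xu]; rewrite ?eqxx.
    case: (eqVneq v u) => [->|vu] //; by rewrite (negbTE (hneq _ vu)).
  case: (eqVneq v u) => [->|vu].
    by move=> /eqP ux; rewrite ux idem.
  done.
have f3' : forall x, #|fibv phi' (phi' x)| <= 3.
  by move=> x; apply: leq_trans (subset_leq_card (sub x)) (f3 x).
have cn' : #|[set v | phi' v != v]| = n.
  have -> : [set v | phi' v != v] = [set v | phi v != v] :\ u.
    apply/setP => v; rewrite !inE /phi'; case: (eqVneq v u) => [->|vu] //=.
    by rewrite eqxx.
  by move: cn; rewrite (cardsD1 u) inE nu => -[].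
case: (IH phi' idem' f3' cn') => s0 [m0 l0 w0].
exists (rcons s0 (Pend phi)); split.
- apply: chain_rcons => //; rewrite l0.
  have pu : phi' u = u by rewrite /phi' eqxx.
  have pphiu : phi' (phi u) = phi u.
    by rewrite /phi' (negbTE nu) idem.
  set U := fibv phi' (phi' u); set W := fibv phi' (phi' (phi u)).
  have inU : forall v, (v \in U) = (v == u).
    move=> v; rewrite inE pu /phi'; case: (v =P u) => [_|/eqP vu]; first by rewrite eqxx.
    by rewrite (negbTE (hneq _ vu)).
  have inW : forall v, (v \in W) = (v != u) && (phi v == phi u).
    move=> v; rewrite inE pphiu /phi'; case: (v =P u) => [_|_] /=.
      by rewrite eq_sym (negbTE nu).
    done.
  have F1 : U :|: W = fibv phi (phi u).
    apply/setP => v; rewrite in_setU inU inW inE.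
    by case: (v =P u) => [->|_] /=; rewrite ?eqxx.
  have F2 : forall x, phi x != phi u -> fibv phi' (phi' x) = fibv phi (phi x).
    move=> x px.
    have xu : x != u by apply: contra px => /eqP->.
    have -> : phi' x = phi x by rewrite /phi' (negbTE xu).
    apply/setP => v; rewrite !inE /phi'; case: (v =P u) => [->|_] //.
    rewrite (eq_sym (phi u)) (negbTE px); apply/negbTE/eqP => e1.
    by move/eqP: px; apply; rewrite e1 idem.
  have uU : u \in U by rewrite inU.
  have puW : phi u \in W by rewrite inW idem eqxx andbT.
  exists U, W; split.
  + exact: imset_f.
  + exact: imset_f.
  + by apply/negP => /eqP eUW; move: uU; rewrite eUW inW eqxx.
  + apply/setP => Z; rewrite in_setU1 !in_setD1; apply/imsetP/idP.
    * case=> x _ ->.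
      case: (eqVneq (phi x) (phi u)) => [->|px]; first by rewrite F1 eqxx.
      apply/orP; right.
      have xu : x != u by apply: contra px => /eqP->.
      have px' : phi' x = phi x by rewrite /phi' (negbTE xu).
      have G : (u == phi x) = false.
        by apply/negbTE/eqP => e1; move/eqP: px; apply; rewrite e1 idem.
      rewrite -F2 //; apply/and3P; split; last exact: imset_f.
      - apply/negP => /eqP eZW; move: puW; rewrite -eZW inE pphiu px'.
        by rewrite eq_sym (negbTE px).
      - apply/negP => /eqP eZU; move: uU; rewrite -eZU inE pu px'.
        by rewrite G.
    * case/predU1P => [->|/and3P[ZW ZU /imsetP[x _ eZ]]]; first by exists u; rewrite ?F1.
      have xu : x != u by apply: contra ZU => /eqP xu; rewrite eZ xu.
      case: (eqVneq (phi x) (phi u)) => [px|px].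
        move: ZW; rewrite eZ /W pphiu.
        have -> : phi' x = phi u by rewrite /phi' (negbTE xu).
        by rewrite eqxx.
      by exists x => //; rewrite eZ F2.
- by rewrite last_rcons.
- move=> P; rewrite -rcons_cons mem_rcons in_cons => /predU1P[->|]; first exact: Pend_max.
  exact: w0.
Qed.
End Init.


Lemma chain_cat (T : finType) (P : {set {set T}}) s1 s2 :
  merge_chain P s1 -> merge_chain (last P s1) s2 -> merge_chain P (s1 ++ s2).
Proof. by elim: s1 P => [|R s IH] P //= [m ms] ml; split => //; apply: IH. Qed.

Section Reduce.
Variables (T : finType) (e : rel T) (phi : T -> T).
Hypothesis idem : forall x, phi (phi x) = phi x.

Local Notation T' := {x : T | phi x == x}.
Definition fq (v : T) : T' := exist _ (phi v) (introT eqP (idem v)).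
Definition eq' (a b : T') : bool :=
  (a != b) && [exists u, exists v, [&& fq u == a, fq v == b & e u v]].

Lemma fq_surj : forall x : T', exists u, fq u = x.
Proof. by case=> x px; exists x; apply: val_inj => /=; apply/eqP. Qed.

Lemma fq_H1 u v : e u v -> fq u != fq v -> eq' (fq u) (fq v).
Proof.
move=> euv ne; rewrite /eq' ne /=; apply/existsP; exists u; apply/existsP; exists v.
by rewrite !eqxx euv.
Qed.

Hypothesis esym : symmetric e.

Lemma eq'_sym : symmetric eq'.
Proof.
move=> a b; rewrite /eq' eq_sym; congr (_ && _).
apply/existsP/existsP => -[u /existsP[v /and3P[h1 h2 h3]]]; exists v; apply/existsP; exists u;
  by rewrite h1 h2 esym h3.
Qed.

Lemma eq'_irr : irreflexive eq'.
Proof. by move=> a; rewrite /eq' eqxx. Qed.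

Hypothesis Hdeg : forall x, phi x = x -> exists p q r, forall u v,
  phi u = x -> e u v -> phi v != x -> phi v \in [set p; q; r].

Lemma card3 (A : finType) (p q r : A) : #|[set p; q; r]| <= 3.
Proof.
apply: leq_trans (leq_card_setU _ _) _; rewrite cards1.
apply: leq_trans (leq_add (leq_card_setU _ _) (leqnn 1)) _.
by rewrite !cards1.
Qed.

Lemma eq'_deg : forall a : T', #|[set b | eq' a b]| <= 3.
Proof.
move=> a; case: (Hdeg (eqP (valP a))) => [p [q [r H]]].
apply: leq_trans (card3 p q r).
rewrite -(card_imset _ val_inj); apply: subset_leq_card; apply/subsetP => y /imsetP[b].
rewrite inE /eq' => /andP[ab /existsP[u /existsP[v /and3P[/eqP fu /eqP fv euv]]]] ->.
rewrite -fv /=; apply: H; [by rewrite -fu | exact: euv | ].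
by apply/eqP => h; move/eqP: ab; apply; rewrite -fv; apply: val_inj => /=; rewrite h.
Qed.

Lemma lift_sing : liftp fq (singleton_partition T') = Pend phi.
Proof.
apply/setP => Z; apply/imsetP/imsetP.
  case=> X /imsetP[x' _ ->] ->; exists (val x') => //.
  apply/setP => v; rewrite !inE (eqP (valP x')) -val_eqE.
  done.
case=> u _ ->; exists [set fq u]; first exact: imset_f.
by apply/setP => v; rewrite !inE -val_eqE.
Qed.

Hypothesis e3 : forall v, #|[set w | e v w]| <= 3.
Hypothesis fib3 : forall x, #|fibv phi (phi x)| <= 3.

Lemma tww' k : 9 < k -> tww_ge e k -> tww_ge eq' k.
Proof.
move=> k9 tw s' cs'; rewrite leqNgt; apply/negP => lt.
case: s' cs' lt => [//|Q1 rest] [-> mc lc] lt.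
have [s0 [m0 l0 w0]] := init e3 idem fib3 (erefl _).
pose S := singleton_partition T :: (s0 ++ map (liftp fq) rest).
have csS : contraction_sequence S.
  split => //.
    apply: chain_cat => //; rewrite l0 -lift_sing.
    exact: (lift_chain fq_surj).
  rewrite last_cat l0 -lift_sing last_map.
  by apply: leq_trans (leq_imset_card _ _) lc.
have := tw S csS; apply/negP; rewrite -ltnNge.
apply: leq_ltn_trans (_ : _ <= maxn (cs_width eq' (singleton_partition _ :: rest)) 9) _;
  last by rewrite gtn_max lt k9.
apply/bigmax_leqP_seq => P PS _; move: PS; rewrite /S in_cons mem_cat => /orP[/eqP->|/orP[Ps0|]].
- by apply: leq_trans (leq_maxr _ _); apply: w0; rewrite mem_head.
- by apply: leq_trans (leq_maxr _ _); apply: w0; rewrite in_cons Ps0 orbT.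
- case/mapP => Q Qr ->.
  have dQ : disj Q by apply: (disj_chain (@disj_sing _) mc).
  apply: leq_trans (liftp_max fq_H1 eq'_sym eq'_deg dQ) _.
  rewrite geq_max leq_maxr andbT; apply: leq_trans (leq_maxl _ _).
  rewrite /cs_width.
  apply: (@leq_bigmax_seq _ _ xpredT (fun P => max_red_degree eq' P)) => //.
  by rewrite in_cons Qr orbT.
Qed.

Lemma reduce k : 9 < k -> tww_ge e k ->
  (forall (T2 : finType) (e2 : rel T2),
      simple_graph e2 -> subcubic e2 -> tww_ge e2 k -> #|T| <= #|T2|) ->
  (exists z, phi z != z) -> False.
Proof.
move=> k9 tw mini [z nz].
have := mini T' eq' (conj eq'_sym eq'_irr) eq'_deg (tww' k9 tw).
rewrite card_sig; apply/negP; rewrite -ltnNge.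
rewrite -[X in _ < X](cardC [pred x | phi x == x]) -[X in X < _]addn0 ltn_add2l.
by apply/card_gt0P; exists z; rewrite !inE.
Qed.

End Reduce.


Section Cases.
Variables (T : finType) (e : rel T).

Lemma nb3 u : #|[set w | e u w]| <= 3 -> exists p q r, forall v, e u v -> v \in [set p; q; r].
Proof.
move=> h; set S := [set w | e u w]; pose s := enum S.
exists (nth u s 0), (nth u s 1), (nth u s 2) => v euv.
have vs : v \in s by rewrite mem_enum inE.
have hi : index v s < 3.
  by apply: leq_trans h; rewrite cardE index_mem.
rewrite -(nth_index u vs); move: hi; case: (index v s) => [|[|[|i]]] // _;
  by rewrite !inE eqxx ?orbT.
Qed.

Lemma nb2 u b d : #|[set w | e u w]| <= 3 -> b != d -> e u b -> e u d ->
  exists p, forall v, e u v -> v \in [set b; d; p].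
Proof.
move=> h bd eb ed; set S' := [set w | e u w] :\ b :\ d.
have c1 : #|S'| <= 1.
  move: h; rewrite (cardsD1 b) (cardsD1 d ([set w | e u w] :\ b)).
  by rewrite !inE eb ed eq_sym bd.
case: (pickP (mem S')) => [p pS|none].
  exists p => v ev; rewrite !inE.
  case: (v =P b) => //= /eqP vb; case: (v =P d) => //= /eqP vd.
  have vS : v \in S' by rewrite !inE vd vb ev.
  by rewrite ((card_le1P c1) p pS v) in vS.
exists b => v ev; rewrite !inE.
case: (v =P b) => //= /eqP vb; case: (v =P d) => //= /eqP vd.
by move: (none v); rewrite /= !inE vd vb ev.
Qed.

Lemma deg_single (phi : T -> T) a : #|[set w | e a w]| <= 3 ->
  (forall u, phi u = a -> u = a) ->
  exists p q r, forall u v, phi u = a -> e u v -> phi v != a -> phi v \in [set p; q; r].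
Proof.
move=> h ha; case: (nb3 h) => p [q [r H]]; exists (phi p), (phi q), (phi r).
move=> u v /ha -> /H; rewrite !inE => /orP[/orP[]|] /eqP-> _; by rewrite eqxx ?orbT.
Qed.

Lemma deg_pair (phi : T -> T) a a2 b d b2 d2 p1 p2 c :
  (forall u, phi u = a -> u = a \/ u = a2) ->
  (forall v, e a v -> v \in [set b; d; p1]) ->
  (forall v, e a2 v -> v \in [set b2; d2; p2]) ->
  (phi b = a \/ phi b = c) -> (phi d = a \/ phi d = c) ->
  (phi b2 = a \/ phi b2 = c) -> (phi d2 = a \/ phi d2 = c) ->
  exists p q r, forall u v, phi u = a -> e u v -> phi v != a -> phi v \in [set p; q; r].
Proof.
move=> ha N1 N2 hb hd hb2 hd2; exists c, (phi p1), (phi p2).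
have key : forall t, (phi t = a \/ phi t = c) -> phi t != a -> phi t \in [set c; phi p1; phi p2].
  by move=> t [->|->]; rewrite ?eqxx // !inE eqxx.
move=> u v /ha [->|->].
- move/N1 => /setUP[/setUP[]|] /set1P-> //; try exact: key.
  by rewrite !inE eqxx ?orbT.
- move/N2 => /setUP[/setUP[]|] /set1P-> //; try exact: key.
  by rewrite !inE eqxx ?orbT.
Qed.

End Cases.

Unset Implicit Arguments. Set Strict Implicit.

Theorem mainTheorem12 (k : nat) (T : finType) (e : rel T) :
  9 < k ->
  simple_graph e -> subcubic e -> tww_ge e k ->
  (forall (T' : finType) (e' : rel T'),
      simple_graph e' -> subcubic e' -> tww_ge e' k -> #|T| <= #|T'|) ->
  girth_ge e 5.
Proof.
move=> k9 [esym eirr] e3 tw mini c /and3P[uc sz cyc].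
rewrite leqNgt; apply/negP => lt.
case: c uc sz cyc lt => [|x [|y [|z [|w [|t s]]]]] //= uc _ cyc _.
- move: uc; rewrite !inE !negb_or => /and3P[/andP[xy xz] yz _].
  case/and4P: cyc => exy eyz ezx _.
  pose phi := fun v => if v == z then x else v.
  have zx : z != x by rewrite eq_sym.
  have px : phi x = x by rewrite /phi (negbTE xz).
  have py : phi y = y by rewrite /phi (negbTE yz).
  have pz : phi z = x by rewrite /phi eqxx.
  have idem : forall v, phi (phi v) = phi v.
    move=> v; rewrite /phi; case: (v =P z) => [_|/eqP vz]; first by case: ifP.
    by rewrite (negbTE vz).
  have Hdeg : forall a, phi a = a -> exists p q r, forall u v,
      phi u = a -> e u v -> phi v != a -> phi v \in [set p; q; r].
    move=> a _; case: (a =P x) => [->|/eqP ax].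
      have exz : e x z by rewrite esym.
      have ezy : e z y by rewrite esym.
      have [p1 N1] := nb2 (e3 x) yz exy exz.
      have [p2 N2] := nb2 (e3 z) xy ezx ezy.
      apply: (@deg_pair T e phi x z y z x y p1 p2 y _ N1 N2);
        [ | by right | by left | by left | by right].
      by move=> u; rewrite /phi; case: (u =P z) => [->|_ ->]; [right|left].
    apply: deg_single; first exact: e3.
    move=> u; rewrite /phi; case: (u =P z) => // _ h.
    by move: ax; rewrite h eqxx.
  have fib3 : forall a, #|fibv phi (phi a)| <= 3.
    move=> a; apply: leq_trans (card3 (phi a) z z); apply: subset_leq_card.
    apply/subsetP => v; rewrite inE /phi; case: (v =P z) => [->|_].
      by rewrite !inE eqxx ?orbT.
    by move/eqP->; rewrite !inE eqxx.
  apply: (reduce idem esym Hdeg e3 fib3 k9 tw mini).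
  by exists z; rewrite pz.
- move: uc; rewrite !inE !negb_or => /and4P[/and3P[xy xz xw] /andP[yz yw] zw _].
  case/and5P: cyc => exy eyz ezw ewx _.
  pose phi := fun v => if v == z then x else if v == w then y else v.
  have wz : w != z by rewrite eq_sym.
  have px : phi x = x by rewrite /phi (negbTE xz) (negbTE xw).
  have py : phi y = y by rewrite /phi (negbTE yz) (negbTE yw).
  have pz : phi z = x by rewrite /phi eqxx.
  have pw : phi w = y by rewrite /phi (negbTE wz) eqxx.
  have idem : forall v, phi (phi v) = phi v.
    move=> v; case: (v =P z) => [->|/eqP vz]; first by rewrite pz px.
    case: (v =P w) => [->|/eqP vw]; first by rewrite pw py.
    have pv : phi v = v by rewrite /phi (negbTE vz) (negbTE vw).
    by rewrite !pv.
  have Hdeg : forall a, phi a = a -> exists p q r, forall u v,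
      phi u = a -> e u v -> phi v != a -> phi v \in [set p; q; r].
    move=> a _; case: (a =P x) => [->|/eqP ax].
      have exw : e x w by rewrite esym.
      have ezy : e z y by rewrite esym.
      have [p1 N1] := nb2 (e3 x) yw exy exw.
      have [p2 N2] := nb2 (e3 z) yw ezy ezw.
      apply: (@deg_pair T e phi x z y w y w p1 p2 y _ N1 N2);
        [ | by right | by right | by right | by right].
      move=> u; rewrite /phi; case: (u =P z) => [->|_]; first by right.
      case: (u =P w) => [_ h|_ ->]; last by left.
      by move: xy; rewrite h eqxx.
    case: (a =P y) => [->|/eqP ay].
      have eyx : e y x by rewrite esym.
      have ewz : e w z by rewrite esym.
      have [p1 N1] := nb2 (e3 y) xz eyx eyz.
      have [p2 N2] := nb2 (e3 w) xz ewx ewz.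
      apply: (@deg_pair T e phi y w x z x z p1 p2 x _ N1 N2);
        [ | by right | by right | by right | by right].
      move=> u; rewrite /phi; case: (u =P z) => [_ h|_].
        by move: xy; rewrite h eqxx.
      case: (u =P w) => [->|_ ->]; by [right|left].
    apply: deg_single; first exact: e3.
    move=> u; rewrite /phi; case: (u =P z) => [_ h|_].
      by move: ax; rewrite h eqxx.
    case: (u =P w) => // _ h.
    by move: ay; rewrite h eqxx.
  have fib3 : forall a, #|fibv phi (phi a)| <= 3.
    move=> a; apply: leq_trans (card3 (phi a) z w); apply: subset_leq_card.
    apply/subsetP => v; rewrite inE /phi; case: (v =P z) => [->|_].
      by rewrite !inE eqxx ?orbT.
    case: (v =P w) => [->|_].
      by rewrite !inE eqxx ?orbT.
    by move/eqP->; rewrite !inE eqxx.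
  apply: (reduce idem esym Hdeg e3 fib3 k9 tw mini).
  by exists z; rewrite pz.
Qed.
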